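(* Let $H\in(\tfrac12,1)$, $\sigma>0$. (1) For all integers $1\le i\le n-1<N$, $$\sigma c_H (n-1)^{H-\frac12}I_n(i)\le j_n^H(i)\le \sigma c_H\, n^{H-\frac12}I_n(i),$$ where $I_n(i)=\int_{i-1}^i x^{\frac12-H}\phi_n^H(x)dx$ and $\phi_n^H(x)=(n-x)^{H-\frac12}-(n-1-x)^{H-\frac12}$. (2) For all integers $1<n\le N$, $$g_H\le g_n^H\le g_H\Big(1+\frac1{n-1}\Big)^{H-\frac12}.$$
   Context: $c_H=\sqrt{\frac{2H\,\Gamma(\frac32-H)}{\Gamma(H+\frac12)\Gamma(2-2H)}}$, $C_H=c_H(H-\frac12)$, $g_H=\frac{\sigma c_H}{H+\frac12}$, $j_n^H(i)=\sigma C_H\int_{i-1}^i x^{\frac12-H}\Big(\int_0^1(v+n-1)^{H-\frac12}(v+n-1-x)^{H-\frac32}dv\Big)dx$, $g_n^H=\sigma C_H\int_{n-1}^n x^{\frac12-H}(n-x)^{H-\frac12}\Big(\int_0^1(y(n-x)+x)^{H-\frac12}y^{H-\frac32}dy\Big)dx$. *)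

(* Defs.v *)
From HB Require Import structures.
From mathcomp Require Import all_boot all_order all_algebra.
From mathcomp Require Import all_classical all_reals all_analysis.
Set Implicit Arguments. Unset Strict Implicit. Unset Printing Implicit Defensive.
Import Order.TTheory GRing.Theory Num.Theory.
Import numFieldNormedType.Exports.
Local Open Scope classical_set_scope.
Local Open Scope ring_scope.

Section Defs.
Variable R : realType.
Notation mu := (@lebesgue_measure R).

Definition Gamma (s : R) : R :=
  fine (\int[mu]_(t in `]0%R, +oo[) ((t `^ (s - 1)) * expR (- t))%:E)%E.

Definition c_H (H : R) : R :=
  Num.sqrt ((2 * H * Gamma (3 / 2 - H)) /
            (Gamma (H + 1 / 2) * Gamma (2 - 2 * H))).

Definition C_H (H : R) : R := c_H H * (H - 1 / 2).

Definition g_H (H sigma : R) : R := sigma * c_H H / (H + 1 / 2).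

Definition j_nH (H sigma : R) (n i : nat) : \bar R :=
  ((sigma * C_H H)%:E *
   \int[mu]_(x in `[(i%:R - 1)%R, i%:R]%classic)
     ((x `^ (1 / 2 - H))%:E *
      \int[mu]_(v in `[0%R, 1%R]%classic)
        (((v + n%:R - 1) `^ (H - 1 / 2)) *
         ((v + n%:R - 1 - x) `^ (H - 3 / 2)))%:E))%E.

Definition g_nH (H sigma : R) (n : nat) : \bar R :=
  ((sigma * C_H H)%:E *
   \int[mu]_(x in `[(n%:R - 1)%R, n%:R]%classic)
     ((x `^ (1 / 2 - H) * (n%:R - x) `^ (H - 1 / 2))%:E *
      \int[mu]_(y in `[0%R, 1%R]%classic)
        (((y * (n%:R - x) + x) `^ (H - 1 / 2)) * (y `^ (H - 3 / 2)))%:E))%E.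

Definition phi_nH (H : R) (n : nat) (x : R) : R :=
  (n%:R - x) `^ (H - 1 / 2) - (n%:R - 1 - x) `^ (H - 1 / 2).

Definition I_n (H : R) (n i : nat) : \bar R :=
  (\int[mu]_(x in `[(i%:R - 1)%R, i%:R]%classic)
     ((x `^ (1 / 2 - H)) * phi_nH H n x)%:E)%E.

End Defs.

(* Main.v *)
Require Import Defs.
From HB Require Import structures.
From mathcomp Require Import all_boot all_order all_algebra.
From mathcomp Require Import all_classical all_reals all_analysis.
From mathcomp Require Import measurable_realfun lebesgue_measure.
From mathcomp Require Import ring lra zify.
Import Order.TTheory GRing.Theory Num.Theory.
Import numFieldNormedType.Exports.
Local Open Scope classical_set_scope.
Local Open Scope ring_scope.

Section H.
Variable R : realType.
Notation mu := (@lebesgue_measure R).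

Lemma lin_derive (s c v : R) : is_derive v 1 (fun v => s * v + c) s.
Proof.
have h1 : is_derive v 1 (@id R) 1 by exact: is_derive_id.
have h2 : is_derive v 1 ( *%R s) (s *: 1) by exact: is_deriveZ.
have h3 := is_deriveD h2 (is_derive_cst c v 1).
rewrite scaler1 addr0 in h3.
exact: h3.
Qed.

Lemma aff_derive (p s c v : R) : 0 < s * v + c ->
  is_derive v 1 (fun v => (s * v + c) `^ p) (p * (s * v + c) `^ (p - 1) * s).
Proof.
move=> h.
have := @is_derive1_comp R (@powR R ^~ p) (fun v => s * v + c) v _ _ (is_derive1_powR p h) (lin_derive s c v).
by [].
Qed.

Lemma aff_cont (p s c v : R) : 0 < s * v + c ->
  {for v, continuous (fun v => (s * v + c) `^ p)}.
Proof.
move=> h; apply/differentiable_continuous/derivable1_diffP.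
by have [] := aff_derive p s c v h.
Qed.

Lemma FTCaff (p s c b d : R) : b < d -> s != 0 -> p + 1 != 0 ->
  (forall v, b <= v <= d -> 0 < s * v + c) ->
  (\int[mu]_(v in `[b, d]) ((s * v + c) `^ p)%:E =
   (((s * d + c) `^ (p + 1) - (s * b + c) `^ (p + 1)) / (s * (p + 1)))%:E)%E.
Proof.
move=> bd s0 p0 pos.
pose k := (s * (p + 1))^-1.
pose F := fun v => k * (s * v + c) `^ (p + 1).
have dF v : 0 < s * v + c -> is_derive v 1 F ((s * v + c) `^ p).
  move=> h; have := is_deriveZ k (aff_derive (p + 1) s c v h).
  have -> : k \*: (fun v => (s * v + c) `^ (p + 1)) = F by apply/funext.
  move=> h'; apply: is_derive_eq h' _.
  rewrite /k addrK; change ((s * (p + 1))^-1 * ((p + 1) * (s * v + c) `^ p * s) = (s * v + c) `^ p).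
  by field; rewrite p0 s0.
have cF v : 0 < s * v + c -> {for v, continuous F}.
  move=> h; apply/differentiable_continuous/derivable1_diffP.
  by have [] := dF v h.
have := @continuous_FTC2 R (fun v => (s * v + c) `^ p) F b d bd.
rewrite /F /= => ->.
- by rewrite -EFinB /k -mulrBr mulrC.
- apply: continuous_in_subspaceT => v; rewrite inE /= in_itv /= => vin.
  exact: aff_cont p s c v (pos _ vin).
- split.
  + move=> v; rewrite in_itv /= => /andP[h1 h2].
    by have [] := dF v (pos v _); rewrite ?(ltW h1) ?(ltW h2).
  + apply: cvg_at_right_filter; apply: cF; apply: pos; by rewrite lexx ltW.
  + apply: cvg_at_left_filter; apply: cF; apply: pos; by rewrite lexx ltW.
- move=> v; rewrite in_itv /= => /andP[h1 h2].
  rewrite derive1E; apply: derive_val.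
  by apply: dF; apply: pos; rewrite (ltW h1) (ltW h2).
Qed.

Lemma trunc (D : set R) (f : R -> R) (A : nat -> set R) (c : nat -> R) (L : R) :
  measurable D -> (forall k, measurable (A k)) -> (forall k, A k `<=` D) ->
  (forall k, A k `<=` A k.+1) -> measurable_fun D f -> (forall x, D x -> 0 <= f x) ->
  (forall x, D x -> f x = 0 \/ exists k, A k x) ->
  (forall k, (\int[mu]_(x in A k) (f x)%:E = (c k)%:E)%E) -> c @ \oo --> L ->
  (\int[mu]_(x in D) (f x)%:E = L%:E)%E.
Proof.
move=> mD mA AD AS mf f0 fA Ic cL.
pose g : nat -> R -> \bar R := fun k => (EFin \o f) \_ (A k).
have Amono m n : (m <= n)%N -> A m `<=` A n.
  move=> /subnK <-; elim: (n - m)%N => // k IH.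
  by rewrite addSn; apply: subset_trans IH (AS _).
have mg k : measurable_fun D (g k).
  apply: (measurable_restrict (EFin \o f) (mA k) mD).1.
  exact: (measurable_funS mD (@subIsetl _ D (A k)) ((measurable_EFinP D f).2 mf)).
have g0 k x : D x -> (0 <= g k x)%E.
  move=> _; apply: erestrict_ge0 => y Ay /=; rewrite lee_fin; apply: f0.
  exact: AD Ay.
have ndg x : D x -> {homo g^~ x : n m / (n <= m)%N >-> (n <= m)%E}.
  move=> Dx m n mn; apply: restrict_lee; last exact: Amono.
  by move=> y Ay /=; rewrite lee_fin; apply: f0; exact: AD Ay.
have := monotone_convergence mu mD mg g0 ndg.
have -> : (fun n => \int[mu]_(x in D) g n x)%E = EFin \o c.
  apply/funext => n /=; rewrite /g -integral_mkcondr setIidr; first exact: Ic.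
  exact: AD.
rewrite EFin_lim; last by apply/cvg_ex; exists L.
rewrite (cvg_lim _ cL) // => <-.
apply: eq_integral => x; rewrite inE => Dx.
case: (fA x Dx) => [fx0|[k Akx]].
  have -> : (g^~ x) = (fun=> 0%E).
    apply/funext => n; rewrite /g /patch; case: ifP => //= _.
    by rewrite fx0.
  by rewrite lim_cst // fx0.
apply/esym/cvg_lim => //; apply: cvg_near_cst; exists k => // n /= kn.
by rewrite /g patchT // inE; apply: Amono kn _ Akx.
Qed.

Lemma inv2_cvg : (fun k : nat => (k.+2%:R : R)^-1) @ \oo --> 0.
Proof.
have := @cvg_harmonic R; rewrite -cvg_shiftS.
by apply: cvg_trans; apply: near_eq_cvg; near=> k.
Unshelve. all: by end_near. Qed.

Lemma POW (p : R) : -1 < p -> p != 0 ->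
  (\int[mu]_(v in `[0%R, 1%R]) (v `^ p)%:E = ((p + 1)^-1)%:E)%E.
Proof.
move=> p1 p0.
have p10 : 0 < p + 1 by lra.
pose e := (p + 1)^-1.
have e0 : 0 < e by rewrite invr_gt0.
pose b k := ((k.+2%:R : R)^-1) `^ e.
have bpos k : 0 < b k by apply: powR_gt0; rewrite invr_gt0.
have bpow k : (b k) `^ (p + 1) = (k.+2%:R)^-1.
  by rewrite /b -powRrM mulVf ?gt_eqF// powRr1// invr_ge0.
have blt1 k : b k < 1.
  have h : ((k.+2%:R : R)^-1) `^ e < 1 `^ e.
    apply: gt0_ltr_powR => //; rewrite ?nnegrE ?invr_ge0//.
    by rewrite invf_lt1 // ltr1n.
  by rewrite powR1 in h.
have := (@trunc `[0%R, 1%R] (fun v => v `^ p) (fun k => `[b k, 1%R]%classic) (fun k => (1 - (k.+2%:R)^-1) / (p + 1)) ((p+1)^-1)).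
move=> T; apply: T.
- exact: measurable_itv.
- move=> k; exact: measurable_itv.
- move=> k x /=; rewrite !in_itv /= => /andP[h1 ->]; by rewrite (le_trans _ h1)// ltW.
- move=> k x /=; rewrite !in_itv /= => /andP[h1 ->]; rewrite andbT (le_trans _ h1)//.
  apply: ge0_ler_powR; rewrite ?nnegrE ?invr_ge0 ?ltW//.
  by rewrite ltf_pV2 ?posrE // ltr_nat.
- exact: measurable_funTS (measurable_powR _).
- by move=> x _; apply: powR_ge0.
- move=> x; rewrite /= in_itv /= => /andP[]; rewrite le_eqVlt => /predU1P[<- _|x0 x1].
    by left; rewrite powR0.
  right; have xp : 0 < x `^ (p + 1) by apply: powR_gt0.
  pose k := Num.bound ((x `^ (p + 1))^-1).
  exists k; rewrite /= in_itv /= x1 andbT.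
  have hk : (k.+2%:R : R)^-1 <= x `^ (p + 1).
    rewrite -[X in _ <= X]invrK lef_pV2 ?posrE ?invr_gt0 //.
    apply: le_trans (ltW (archi_boundP _)) _; first by rewrite invr_ge0 ltW.
    by rewrite ler_nat /k -addn2 leq_addr.
  rewrite (_ : x = (x `^ (p + 1)) `^ e); last first.
    by rewrite -powRrM mulfV ?gt_eqF// powRr1// ltW.
  rewrite /b; apply: ge0_ler_powR => //; rewrite ?nnegrE ?invr_ge0 ?powR_ge0 //; exact: ltW.
- move=> k.
  have -> : (\int[mu]_(x in `[b k, 1%R]) (x `^ p)%:E =
     \int[mu]_(x in `[b k, 1%R]) ((1 * x + 0) `^ p)%:E)%E.
    by apply: eq_integral => x _; rewrite mul1r addr0.
  rewrite FTCaff //; last by move=> v /andP[h _]; rewrite mul1r addr0 (lt_le_trans (bpos k)).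
  + by rewrite !mul1r !addr0 powR1 bpow.
  + by rewrite gt_eqF.
- rewrite -[X in _ --> X]mul1r; apply: cvgMr_tmp.
  rewrite -[X in _ --> X]subr0; apply: cvgB; [exact: cvg_cst | exact: inv2_cvg].
Qed.

Lemma POWR (p m : R) : -1 < p -> p != 0 ->
  (\int[mu]_(v in `[(m - 1)%R, m]) ((m - v) `^ p)%:E = ((p + 1)^-1)%:E)%E.
Proof.
move=> p1 p0.
have p10 : 0 < p + 1 by lra.
pose e := (p + 1)^-1.
have e0 : 0 < e by rewrite invr_gt0.
pose b k := ((k.+2%:R : R)^-1) `^ e.
have bpos k : 0 < b k by apply: powR_gt0; rewrite invr_gt0.
have bpow k : (b k) `^ (p + 1) = (k.+2%:R)^-1.
  by rewrite /b -powRrM mulVf ?gt_eqF// powRr1// invr_ge0.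
have blt1 k : b k < 1.
  have h : ((k.+2%:R : R)^-1) `^ e < 1 `^ e.
    apply: gt0_ltr_powR => //; rewrite ?nnegrE ?invr_ge0//.
    by rewrite invf_lt1 // ltr1n.
  by rewrite powR1 in h.
have := (@trunc `[(m - 1)%R, m] (fun v => (m - v) `^ p) (fun k => `[(m - 1)%R, m - b k]%classic) (fun k => (1 - (k.+2%:R)^-1) / (p + 1)) ((p+1)^-1)).
move=> T; apply: T.
- exact: measurable_itv.
- move=> k; exact: measurable_itv.
- move=> k x /=; rewrite !in_itv /= => /andP[-> h1] /=.
  by rewrite (le_trans h1)// lerBlDr lerDl ltW.
- move=> k x /=; rewrite !in_itv /= => /andP[-> h1] /=; rewrite (le_trans h1)//.
  rewrite lerD2l lerN2.
  apply: ge0_ler_powR; rewrite ?nnegrE ?invr_ge0 ?ltW//.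
  by rewrite ltf_pV2 ?posrE // ltr_nat.
- apply: measurable_funTS.
  change (measurable_fun setT ((@powR R ^~ p) \o (fun v => m - v))).
  apply: measurableT_comp; [exact: measurable_powR | exact: measurable_funB].
- by move=> x _; apply: powR_ge0.
- move=> x; rewrite /= in_itv /= => /andP[x1]; rewrite le_eqVlt => /predU1P[-> |x0].
    by left; rewrite subrr powR0.
  right; set y := m - x.
  have y0 : 0 < y by rewrite subr_gt0.
  have y1 : y <= 1 by rewrite /y lerBlDr -lerBlDl.
  have xp : 0 < y `^ (p + 1) by apply: powR_gt0.
  pose k := Num.bound ((y `^ (p + 1))^-1).
  exists k; rewrite /= in_itv /= x1 /=.
  have hk : (k.+2%:R : R)^-1 <= y `^ (p + 1).
    rewrite -[X in _ <= X]invrK lef_pV2 ?posrE ?invr_gt0 //.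
    apply: le_trans (ltW (archi_boundP _)) _; first by rewrite invr_ge0 ltW.
    by rewrite ler_nat /k -addn2 leq_addr.
  rewrite lerBrDl -lerBrDr -/y.
  rewrite (_ : y = (y `^ (p + 1)) `^ e); last first.
    by rewrite -powRrM mulfV ?gt_eqF// powRr1// ltW.
  rewrite /b; apply: ge0_ler_powR => //; rewrite ?nnegrE ?invr_ge0 ?powR_ge0 //; exact: ltW.
- move=> k.
  have -> : (\int[mu]_(x in `[(m - 1)%R, (m - b k)%R]) (((m - x) `^ p)%R)%:E =
     \int[mu]_(x in `[(m - 1)%R, (m - b k)%R]) (((-1 * x + m) `^ p)%R)%:E)%E.
    by apply: eq_integral => x _; rewrite mulN1r addrC.
  rewrite FTCaff //.
  + congr (_%:E).
    have -> : -1 * (m - b k) + m = b k by ring.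
    have -> : -1 * (m - 1) + m = 1 by ring.
    rewrite powR1 bpow; field; have := ler0n R k; move: p10 => + +; move=> h1 h2.
    by apply/andP; split; apply/negP => /eqP; lra.
  + by move: (blt1 k); lra.
  + by apply/negP => /eqP; lra.
  + move=> v /andP[_ h]; move: (bpos k); lra.
- rewrite -[X in _ --> X]mul1r; apply: cvgMr_tmp.
  rewrite -[X in _ --> X]subr0; apply: cvgB; [exact: cvg_cst | exact: inv2_cvg].
Qed.

Lemma le_int_nm (D : set R) (f g : R -> \bar R) :
  (forall x, D x -> (0 <= f x)%E) -> (forall x, D x -> (f x <= g x)%E) ->
  (\int[mu]_(x in D) f x <= \int[mu]_(x in D) g x)%E.
Proof.
move=> f0 fg.
have g0 x : D x -> (0 <= g x)%E by move=> Dx; apply: le_trans (fg x Dx); exact: f0.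
rewrite (ge0_integralE mu f0) (ge0_integralE mu g0) /=.
apply: le_ereal_sup => _ [h hf <-]; exists h => // x.
apply: le_trans (hf x) _; rewrite /patch; case: ifPn => // xD.
by apply: fg; rewrite inE in xD.
Qed.

Lemma KEY (a c : R) : 0 < a -> a < 1 -> 0 <= c ->
  (\int[mu]_(v in `[0%R, 1%R]) (((v + c) `^ (a - 1))%R)%:E =
   ((((1 + c) `^ a - c `^ a) / a)%R)%:E)%E.
Proof.
move=> a0 a1; rewrite le_eqVlt => /predU1P[<-|c0].
  have -> : (\int[mu]_(v in `[0%R, 1%R]) (((v + 0) `^ (a - 1))%R)%:E =
     \int[mu]_(v in `[0%R, 1%R]) ((v `^ (a - 1))%R)%:E)%E.
    by apply: eq_integral => x _; rewrite addr0.
  rewrite POW; last by apply/negP => /eqP; lra.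
    by rewrite addr0 powR1 powR0 ?gt_eqF // subr0 subrK div1r.
  by lra.
have -> : (\int[mu]_(v in `[0%R, 1%R]) (((v + c) `^ (a - 1))%R)%:E =
     \int[mu]_(v in `[0%R, 1%R]) (((1 * v + c) `^ (a - 1))%R)%:E)%E.
  by apply: eq_integral => x _; rewrite mul1r.
rewrite FTCaff //.
- by rewrite subrK !mul1r add0r.
- by apply/negP => /eqP; lra.
- by move=> v /andP[h _]; rewrite mul1r; lra.
Qed.

Lemma mpow (g : R -> R) p : measurable_fun setT g -> measurable_fun setT (fun x => g x `^ p).
Proof.
move=> mg; change (measurable_fun setT ((@powR R ^~ p) \o g)).
exact: measurableT_comp (measurable_powR p) mg.
Qed.

Lemma intZ (D : set R) (f : R -> R) (k : R) : measurable D -> measurable_fun D f ->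
  (forall x, D x -> 0 <= f x) -> 0 <= k ->
  (\int[mu]_(x in D) ((k * f x)%R)%:E = k%:E * \int[mu]_(x in D) (f x)%:E)%E.
Proof.
move=> mD mf f0 k0.
under eq_integral do rewrite EFinM.
apply: ge0_integralZl_EFin => //.
- exact/measurable_EFinP.
Qed.

Lemma J_bounds (H m x : R) : 1/2 < H -> H < 1 -> 1 <= m -> 0 <= m - 1 - x ->
  ((((m - 1) `^ (H - 1/2) * ((m - x) `^ (H - 1/2) - (m - 1 - x) `^ (H - 1/2)) / (H - 1/2))%R)%:E
    <= \int[mu]_(v in `[0%R, 1%R])
        ((((v + m - 1) `^ (H - 1 / 2)) * ((v + m - 1 - x) `^ (H - 3 / 2)))%R)%:E)%E /\
  (\int[mu]_(v in `[0%R, 1%R])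
        ((((v + m - 1) `^ (H - 1 / 2)) * ((v + m - 1 - x) `^ (H - 3 / 2)))%R)%:E
    <= (((m `^ (H - 1/2)) * ((m - x) `^ (H - 1/2) - (m - 1 - x) `^ (H - 1/2)) / (H - 1/2))%R)%:E)%E.
Proof.
move=> H1 H2 m1 c0.
set a := H - 1/2; set c := m - 1 - x.
have a0 : 0 < a by rewrite /a; lra.
have a1 : a < 1 by rewrite /a; lra.
have H3 : H - 3/2 = a - 1 by rewrite /a; lra.
have eqv v : v + m - 1 - x = v + c by rewrite /c; ring.
have mx : m - x = 1 + c by rewrite /c; ring.
have K := KEY a c a0 a1 c0.
rewrite -/c in K.
have mc : measurable_fun (`[0%R, 1%R] : set R) (fun v : R => (v + c) `^ (a - 1)).
  apply: measurable_funTS; apply: mpow; exact: measurable_funD.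
have e k : (((k * ((m - x) `^ a - c `^ a) / a)%R)%:E =
    \int[mu]_(v in `[0%R, 1%R]) ((k * (v + c) `^ (a - 1))%R)%:E)%E \/ k < 0.
  have [k0|k0] := leP 0 k; last by right.
  left; rewrite intZ //; last by move=> v _; apply: powR_ge0.
  by rewrite K mx -EFinM mulrA.
split.
- have [|] := e ((m - 1) `^ a); last by rewrite ltNge powR_ge0.
  move=> ->; apply: le_int_nm.
    by move=> v _; rewrite lee_fin mulr_ge0 // powR_ge0.
  move=> v; rewrite /= in_itv /= => /andP[v0 v1].
  rewrite lee_fin eqv H3; apply: ler_wpM2r; first exact: powR_ge0.
  apply: ge0_ler_powR; rewrite ?nnegrE; lra.
- have [|] := e (m `^ a); last by rewrite ltNge powR_ge0.
  move=> ->; apply: le_int_nm.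
    by move=> v _; rewrite lee_fin mulr_ge0 // powR_ge0.
  move=> v; rewrite /= in_itv /= => /andP[v0 v1].
  rewrite lee_fin eqv H3; apply: ler_wpM2r; first exact: powR_ge0.
  apply: ge0_ler_powR; rewrite ?nnegrE; lra.
Qed.

Lemma M_bounds (H m x : R) : 1/2 < H -> H < 1 -> 0 < x -> x <= m ->
  (((x `^ (H - 1/2) / (H - 1/2))%R)%:E <= \int[mu]_(y in `[0%R, 1%R])
     ((((y * (m - x) + x) `^ (H - 1 / 2)) * (y `^ (H - 3 / 2)))%R)%:E)%E /\
  (\int[mu]_(y in `[0%R, 1%R])
     ((((y * (m - x) + x) `^ (H - 1 / 2)) * (y `^ (H - 3 / 2)))%R)%:E
     <= (((m `^ (H - 1/2)) / (H - 1/2))%R)%:E)%E.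
Proof.
move=> H1 H2 x0 xm.
set a := H - 1/2.
have a0 : 0 < a by rewrite /a; lra.
have H3 : H - 3/2 = a - 1 by rewrite /a; lra.
have K : (\int[mu]_(y in `[0%R, 1%R]) ((y `^ (a - 1))%R)%:E = (a^-1)%:E)%E.
  rewrite POW ?subrK //; first lra.
  by apply/negP => /eqP; lra.
have mc : measurable_fun (`[0%R, 1%R] : set R) (fun y : R => y `^ (a - 1)).
  apply: measurable_funTS; exact: measurable_powR.
have e k : 0 <= k -> (((k / a)%R)%:E =
    \int[mu]_(y in `[0%R, 1%R]) ((k * y `^ (a - 1))%R)%:E)%E.
  move=> k0; rewrite intZ //; last by move=> v _; apply: powR_ge0.
  by rewrite K -EFinM.
split.
- rewrite e ?powR_ge0 //; apply: le_int_nm.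
    by move=> v _; rewrite lee_fin mulr_ge0 // powR_ge0.
  move=> y; rewrite /= in_itv /= => /andP[y0 y1].
  rewrite lee_fin H3; apply: ler_wpM2r; first exact: powR_ge0.
  have : 0 <= y * (m - x) by apply: mulr_ge0; lra.
  move=> h; apply: ge0_ler_powR; rewrite ?nnegrE; lra.
- rewrite e ?powR_ge0 //; apply: le_int_nm.
    by move=> v _; rewrite lee_fin mulr_ge0 // powR_ge0.
  move=> y; rewrite /= in_itv /= => /andP[y0 y1].
  rewrite lee_fin H3; apply: ler_wpM2r; first exact: powR_ge0.
  have : 0 <= y * (m - x) by apply: mulr_ge0; lra.
  have : y * (m - x) <= m - x by rewrite ler_piMl //; lra.
  move=> h h'; apply: ge0_ler_powR; rewrite ?nnegrE; lra.
Qed.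

Lemma powR_anti (r x y : R) : r <= 0 -> 0 < y -> y <= x -> x `^ r <= y `^ r.
Proof.
move=> r0 y0 yx.
have x0 : 0 < x by apply: (lt_le_trans y0).
rewrite -(opprK r) (powRN x (- r)) (powRN y (- r)).
rewrite lef_pV2 ?posrE ?powR_gt0 //.
by apply: ge0_ler_powR; rewrite ?nnegrE ?oppr_ge0 // ltW.
Qed.
End H.

Theorem lemma4p2 (R : realType) (H sigma : R) (N : nat) :
  1 / 2 < H -> H < 1 -> 0 < sigma ->
  (forall n i : nat, (1 <= i)%N -> (i <= n - 1)%N -> (n - 1 < N)%N ->
     (((sigma * c_H H * (n%:R - 1) `^ (H - 1 / 2))%:E * I_n H n i
        <= j_nH H sigma n i)%E /\
      (j_nH H sigma n i
        <= (sigma * c_H H * n%:R `^ (H - 1 / 2))%:E * I_n H n i)%E)) /\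
  (forall n : nat, (1 < n)%N -> (n <= N)%N ->
     ((g_H H sigma)%:E <= g_nH H sigma n)%E /\
     (g_nH H sigma n
        <= (g_H H sigma * (1 + 1 / (n%:R - 1)) `^ (H - 1 / 2))%:E)%E).
Proof.
pose mu := (@lebesgue_measure R).
move=> H1 H2 s0.
set a := H - 1/2.
have a0 : 0 < a by rewrite /a; lra.
have an0 : a != 0 by rewrite gt_eqF.
have cH0 : 0 <= c_H H by rewrite /c_H sqrtr_ge0.
have K0 : 0 <= sigma * C_H H by rewrite /C_H -/a mulr_ge0 ?mulr_ge0 // ltW.
have Ka : sigma * C_H H = sigma * c_H H * a by rewrite /C_H -/a mulrA.
split.
- move=> n i i1 iN _.
  set m : R := n%:R.
  have i1R : 1 <= (i%:R : R) by rewrite ler1n.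
  have imR : (i%:R : R) <= m - 1.
    have h : (i.+1 <= n)%N by lia.
    by rewrite lerBrDr /m natr1 ler_nat.
  have m1 : 1 <= m by lra.
  have mphi : measurable_fun (`[(i%:R - 1)%R, i%:R] : set R)
      (fun x : R => x `^ (1 / 2 - H) * phi_nH H n x).
    apply: measurable_funTS; rewrite /phi_nH.
    apply: measurable_funM; first by apply: mpow.
    by apply: measurable_funB; apply: mpow; apply: measurable_funB.
  have phi0 x : x <= m - 1 -> 0 <= phi_nH H n x.
    move=> xm; rewrite /phi_nH subr_ge0 -/m -/a.
    apply: ge0_ler_powR; rewrite ?nnegrE; lra.
  have f0 x : (`[(i%:R - 1)%R, i%:R]%classic : set R) x -> 0 <= x `^ (1 / 2 - H) * phi_nH H n x.
    rewrite /= in_itv /= => /andP[x1 x2].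
    by apply: mulr_ge0; [exact: powR_ge0 | apply: phi0; lra].
  have eI k : 0 <= k -> ((sigma * c_H H * k)%:E * I_n H n i =
     (sigma * C_H H)%:E * \int[mu]_(x in `[(i%:R - 1)%R, i%:R])
        ((k / a * (x `^ (1 / 2 - H) * phi_nH H n x))%R)%:E)%E.
    move=> k0; rewrite intZ //; last by rewrite divr_ge0 // ltW.
    rewrite muleA -EFinM /I_n; congr (_%:E * _)%E.
    by rewrite Ka; field.
  rewrite /j_nH; split.
  + rewrite eI ?powR_ge0 //; apply: lee_wpmul2l; first by rewrite lee_fin.
    apply: le_int_nm.
      by move=> x Dx; rewrite lee_fin mulr_ge0 ?divr_ge0 ?powR_ge0 ?f0 // ltW.
    move=> x; rewrite /= in_itv /= => /andP[x1 x2].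
    have c0 : 0 <= m - 1 - x by lra.
    have [Jl _] := J_bounds R H m x H1 H2 m1 c0.
    have xp : (0 <= (x `^ (1 / 2 - H))%:E)%E by rewrite lee_fin powR_ge0.
    apply: le_trans (lee_wpmul2l xp Jl).
    rewrite -EFinM lee_fin /phi_nH -/m -/a le_eqVlt; apply/orP; left; apply/eqP.
    by field.
  + rewrite eI ?powR_ge0 //; apply: lee_wpmul2l; first by rewrite lee_fin.
    apply: le_int_nm.
      move=> x _; apply: mule_ge0; first by rewrite lee_fin powR_ge0.
      by apply: integral_ge0 => v _; rewrite lee_fin mulr_ge0 // powR_ge0.
    move=> x; rewrite /= in_itv /= => /andP[x1 x2].
    have c0 : 0 <= m - 1 - x by lra.
    have [_ Ju] := J_bounds R H m x H1 H2 m1 c0.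
    have xp : (0 <= (x `^ (1 / 2 - H))%:E)%E by rewrite lee_fin powR_ge0.
    apply: le_trans (lee_wpmul2l xp Ju) _.
    rewrite -EFinM lee_fin /phi_nH -/m -/a le_eqVlt; apply/orP; left; apply/eqP.
    by field.
- move=> n n1 _.
  set m : R := n%:R.
  have m2 : 2 <= m by rewrite /m ler_nat.
  have am1 : -1 < a by lra.
  have P := POWR R a m am1 an0.
  have mP : measurable_fun (`[(m - 1)%R, m] : set R) (fun x : R => (m - x) `^ a).
    by apply: measurable_funTS; apply: mpow; apply: measurable_funB.
  have eP k : 0 <= k -> ((k%:E * ((a + 1)^-1)%:E) = \int[mu]_(x in `[(m - 1)%R, m])
      ((k * (m - x) `^ a)%R)%:E)%E.
    by move=> k0; rewrite intZ // ?P // => x _; exact: powR_ge0.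
  have int0 x : (0 <= \int[mu]_(y in `[0%R, 1%R])
     ((((y * (m - x) + x) `^ (H - 1 / 2)) * (y `^ (H - 3 / 2)))%R)%:E)%E.
    by apply: integral_ge0 => v _; rewrite lee_fin mulr_ge0 // powR_ge0.
  rewrite /g_nH; split.
  + have eg : g_H H sigma = sigma * C_H H * (a^-1 * (a + 1)^-1).
      rewrite /g_H Ka -/a (_ : H + 1/2 = a + 1); last by rewrite /a; lra.
      by field; apply/andP; split; apply/negP => /eqP; lra.
    rewrite eg (EFinM (sigma * C_H H)) (EFinM (a^-1)) eP; last by rewrite invr_ge0 ltW.
    apply: lee_wpmul2l; first by rewrite lee_fin.
    apply: le_int_nm.
      by move=> x _; rewrite lee_fin mulr_ge0 ?invr_ge0 ?powR_ge0 // ltW.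
    move=> x; rewrite /= in_itv /= => /andP[x1 x2].
    have x0 : 0 < x by lra.
    have [Ml _] := M_bounds R H m x H1 H2 x0 x2.
    have xp : (0 <= (x `^ (1 / 2 - H) * (m - x) `^ (H - 1 / 2))%:E)%E.
      by rewrite lee_fin mulr_ge0 // powR_ge0.
    apply: le_trans (lee_wpmul2l xp Ml).
    rewrite -EFinM lee_fin -/a le_eqVlt; apply/orP; left; apply/eqP.
    have e1 : x `^ (1 / 2 - H) * x `^ a = 1.
      rewrite -powRD; last by apply/implyP => _; rewrite gt_eqF.
      by rewrite (_ : 1 / 2 - H + a = 0) ?powRr0 // /a; ring.
    transitivity ((x `^ (1 / 2 - H) * x `^ a) * (m - x) `^ a / a).
      by rewrite e1 mul1r mulrC.
    by field.
  + have ea : (1 + 1 / (m - 1)) `^ a = m `^ a * (m - 1) `^ (1 / 2 - H).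
      have -> : 1 + 1 / (m - 1) = m * (m - 1)^-1.
        by field; apply/negP => /eqP; lra.
      rewrite powRM ?invr_ge0; [|lra|lra].
      congr (_ * _); rewrite -powR_inv1; last by lra.
      by rewrite -powRrM /a; congr (_ `^ _); ring.
    pose B := (m - 1) `^ (1 / 2 - H) * m `^ a / a.
    have B0 : 0 <= B by rewrite /B divr_ge0 ?mulr_ge0 ?powR_ge0 // ltW.
    have eg : g_H H sigma * (1 + 1 / (m - 1)) `^ a = sigma * C_H H * (B * (a + 1)^-1).
      rewrite ea /g_H Ka /B -/a (_ : H + 1/2 = a + 1); last by rewrite /a; lra.
      by field; apply/andP; split; apply/negP => /eqP; lra.
    rewrite -/a eg (EFinM (sigma * C_H H)) (EFinM B) eP //.
    apply: lee_wpmul2l; first by rewrite lee_fin.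
    apply: le_int_nm.
      move=> x _; apply: mule_ge0; last exact: int0.
      by rewrite lee_fin mulr_ge0 // powR_ge0.
    move=> x; rewrite /= in_itv /= => /andP[x1 x2].
    have x0 : 0 < x by lra.
    have [_ Mu] := M_bounds R H m x H1 H2 x0 x2.
    have xp : (0 <= (x `^ (1 / 2 - H) * (m - x) `^ (H - 1 / 2))%:E)%E.
      by rewrite lee_fin mulr_ge0 // powR_ge0.
    apply: le_trans (lee_wpmul2l xp Mu) _.
    rewrite -EFinM lee_fin -/a.
    pose Q := (m - x) `^ a * m `^ a / a.
    have Q0 : 0 <= Q by rewrite /Q divr_ge0 ?mulr_ge0 ?powR_ge0 // ltW.
    have -> : x `^ (1 / 2 - H) * (m - x) `^ a * (m `^ a / a) = x `^ (1 / 2 - H) * Q.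
      by rewrite /Q; ring.
    have -> : B * (m - x) `^ a = (m - 1) `^ (1 / 2 - H) * Q by rewrite /B /Q; ring.
    apply: ler_wpM2r => //; apply: powR_anti; lra.
Qed.
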